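(* Let $k,n$ be integers with $k\geq 4$ and $n\geq 1$. (1) If $4\leq k\leq 2^{\mathrm{R}_3(\mathcal{B}_n)+n}$, then $\mathrm{GR}_k(\mathcal{B}_2:\mathcal{B}_n)\leq \mathrm{R}_3(\mathcal{B}_n)+n$. (2) If $k>2^{\mathrm{R}_3(\mathcal{B}_n)+n}$, then the pair $(\mathcal{B}_2,\mathcal{B}_n)$ is $(\mathcal{B}_2:\mathcal{B}_n)_k$-good.
   Context: $\mathcal{B}_N$ denotes the Boolean lattice of all subsets of $[N]$ ordered by inclusion. An induced copy of a poset $\mathcal{P}$ in a poset $\mathcal{Q}$ is the image of an injection $f:\mathcal{P}\to\mathcal{Q}$ with $f(X)\le f(Y)$ iff $X\le Y$. A $k$-coloring of $\mathcal{B}_N$ is exact if it uses colors from $[k]$ and every color is used. Monochromatic: all sets share a color; rainbow: pairwise distinct colors. $\mathrm{R}_k(\mathcal{P})$ (Boolean Ramsey number) is the smallest $n$ such that every coloring of $\mathcal{B}_n$ with $k$ colors contains a monochromatic induced copy of $\mathcal{P}$. The pair $(\mathcal{Q},\mathcal{P})$ is $(\mathcal{Q}:\mathcal{P})_k$-good if for every positive integer $N$, every exact $k$-coloring of $\mathcal{B}_N$ contains a rainbow induced copy of $\mathcal{Q}$ or a monochromatic induced copy of $\mathcal{P}$. For a pair that is not good, $\mathrm{GR}_k(\mathcal{Q}:\mathcal{P})$ is the smallest integer $n$ such that for every $N\ge n$, every exact $k$-coloring of $\mathcal{B}_N$ contains a rainbow induced copy of $\mathcal{Q}$ or a monochromatic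 induced copy of $\mathcal{P}$. *)

(* Defs.v *)
From mathcomp Require Import all_boot.
Set Implicit Arguments. Unset Strict Implicit. Unset Printing Implicit Defensive.

(* The Boolean lattice B_N is modelled as {set 'I_N} ordered by \subset. *)
Definition BL (N : nat) := {set 'I_N}.

Definition induced_copy (m N : nat) (f : BL m -> BL N) : Prop :=
  injective f /\ forall X Y : BL m, (f X \subset f Y) = (X \subset Y).

Definition coloring (k N : nat) := BL N -> 'I_k.

Definition exact_coloring (k N : nat) (c : coloring k N) : Prop :=
  forall i : 'I_k, exists X : BL N, c X = i.

Definition has_mono_copy (k N m : nat) (c : coloring k N) : Prop :=
  exists f : BL m -> BL N, induced_copy f /\
    forall X Y : BL m, c (f X) = c (f Y).

Definition has_rainbow_copy (k N m : nat) (c : coloring k N) : Prop :=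
  exists f : BL m -> BL N, induced_copy f /\
    forall X Y : BL m, c (f X) = c (f Y) -> X = Y.

Definition ramsey_prop (k m N : nat) : Prop :=
  forall c : coloring k N, has_mono_copy m c.

Definition is_bool_ramsey (k m r : nat) : Prop :=
  ramsey_prop k m r /\ forall r', ramsey_prop k m r' -> r <= r'.

Definition gr_prop (k q p N : nat) : Prop :=
  forall c : coloring k N, exact_coloring c ->
    has_rainbow_copy q c \/ has_mono_copy p c.

Definition good (k q p : nat) : Prop :=
  forall N, 0 < N -> gr_prop k q p N.

(* GR_k(B_q : B_p) <= m, i.e. m belongs to the (upward closed) set whose
   minimum is GR_k: the property holds for every N >= m. *)
Definition GR_le (k q p m : nat) : Prop :=
  forall N, m <= N -> gr_prop k q p N.

(* Main.v *)
Require Import Defs.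
From mathcomp Require Import all_boot.
From mathcomp Require Import zify.
From Stdlib Require Import Classical.

Set Implicit Arguments. Unset Strict Implicit. Unset Printing Implicit Defensive.

Lemma sub_inj (m N : nat) (f : BL m -> BL N) :
  (forall X Y : BL m, (f X \subset f Y) = (X \subset Y)) -> injective f.
Proof.
move=> H X Y E; apply/eqP; rewrite eqEsubset -!H E subxx //.
Qed.

Lemma imset_inj_sub (T U : finType) (h : T -> U) (X Y : {set T}) :
  injective h -> (h @: X \subset h @: Y) = (X \subset Y).
Proof.
move=> hi; apply/idP/idP; last exact: imsetS.
move=> /subsetP S; apply/subsetP => x xX.
by rewrite -(mem_imset _ _ hi); apply: S; rewrite (mem_imset _ _ hi).
Qed.

Lemma sub2 (Z Z' : {set 'I_2}) :
  (Z \subset Z') = ((ord0 \in Z) ==> (ord0 \in Z')) && ((ord_max \in Z) ==> (ord_max \in Z')).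
Proof.
apply/subsetP/andP.
  by move=> S; split; apply/implyP; apply: S.
case=> /implyP H0 /implyP H1 [[|[|i]] Hi] //.
  by have -> : Ordinal Hi = ord0 by apply: val_inj.
by have -> : Ordinal Hi = ord_max by apply: val_inj.
Qed.

Lemma eq2 (Z Z' : {set 'I_2}) :
  (ord0 \in Z) = (ord0 \in Z') -> (ord_max \in Z) = (ord_max \in Z') -> Z = Z'.
Proof.
move=> H0 H1; apply/setP => -[[|[|i]] Hi] //.
  by have -> : Ordinal Hi = ord0 by apply: val_inj.
by have -> : Ordinal Hi = ord_max by apply: val_inj.
Qed.

Lemma rainbow_of (k N : nat) (c : coloring k N) (A W X D : BL N) :
  A \subset W -> A \subset X -> W \subset D -> X \subset D ->
  ~~ (W \subset X) -> ~~ (X \subset W) ->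
  c A != c W -> c A != c X -> c A != c D -> c W != c X -> c W != c D ->
  c X != c D -> has_rainbow_copy 2 c.
Proof.
move=> AW AX WD XD nWX nXW d1 d2 d3 d4 d5 d6.
pose f (Z : BL 2) : BL N := if ord0 \in Z then (if ord_max \in Z then D else W)
  else (if ord_max \in Z then X else A).
have AD : A \subset D by apply: subset_trans AW WD.
have nWA : ~~ (W \subset A).
  by apply: contra nWX => WA; apply: subset_trans WA AX.
have nXA : ~~ (X \subset A).
  by apply: contra nXW => XA; apply: subset_trans XA AW.
have nDA : ~~ (D \subset A).
  by apply: contra nWA => DA; apply: subset_trans WD DA.
have nDW : ~~ (D \subset W).
  by apply: contra nXW => DW; apply: subset_trans XD DW.
have nDX : ~~ (D \subset X).
  by apply: contra nWX => DX; apply: subset_trans WD DX.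
have Hs : forall Z Z' : BL 2, (f Z \subset f Z') = (Z \subset Z').
  move=> Z Z'; rewrite sub2 /f.
  by case: (ord0 \in Z); case: (ord_max \in Z); case: (ord0 \in Z');
     case: (ord_max \in Z'); rewrite /= ?subxx //; apply/negbTE.
exists f; split; first by split => //; apply: sub_inj.
move=> Z Z'; rewrite /f => E; apply: eq2; move: E;
 by case: (ord0 \in Z); case: (ord_max \in Z); case: (ord0 \in Z');
     case: (ord_max \in Z') => // E; move: d1 d2 d3 d4 d5 d6; rewrite E ?eqxx // eq_sym ?E ?eqxx //.
Qed.

Lemma mono_from_cube (k N n r : nat) (c : coloring k N) (D : BL N) (x0 : 'I_N)
  (a b g : 'I_k) :
  r <= #|D| -> (forall W : BL N, W \subset D -> [|| c W == a, c W == b | c W == g]) ->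
  ramsey_prop 3 n r -> has_mono_copy n c.
Proof.
move=> rD HW Hr.
pose h (i : 'I_r) : 'I_N := nth x0 (enum D) i.
have hi : injective h.
  have lt : forall i : 'I_r, i < size (enum D).
    by move=> i; rewrite -cardE; apply: leq_trans (ltn_ord _) rD.
  move=> i j /eqP; rewrite /h nth_uniq ?enum_uniq ?lt //.
  by move/eqP/val_inj.
have hD : forall i, h i \in D.
  by move=> i; rewrite -mem_enum mem_nth // -cardE; apply: leq_trans (ltn_ord _) rD.
pose G (X : BL r) : BL N := h @: X.
have GD : forall X, G X \subset D.
  by move=> X; apply/subsetP => y /imsetP [x _ ->]; apply: hD.
pose c' (X : BL r) : 'I_3 :=
  if c (G X) == a then @Ordinal 3 0 isT else if c (G X) == b then @Ordinal 3 1 isT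
  else @Ordinal 3 2 isT.
have c'E : forall X Y, c' X = c' Y -> c (G X) = c (G Y).
  move=> X Y; rewrite /c'.
  have := HW _ (GD X); have := HW _ (GD Y).
  move: (c (G X)) (c (G Y)) => u v.
  case ua: (u == a); case ub: (u == b); case va: (v == a); case vb: (v == b);
  move=> Hv Hu /(congr1 val) /= E; try discriminate E;
  by [rewrite (eqP ua) (eqP va) | rewrite (eqP ub) (eqP vb) |
      move: Hu Hv => /= /eqP -> /eqP ->].
have [f [[fi fs] fm]] := Hr c'.
exists (G \o f); split.
  split; first by apply: inj_comp => //; apply: sub_inj => X Y; exact: imset_inj_sub.
  by move=> X Y /=; rewrite imset_inj_sub.
by move=> X Y /=; apply: c'E; apply: fm.
Qed.

Lemma case1 (k N n r : nat) (c : coloring k N) (D : BL N) :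
  r < #|D| -> c D != c set0 -> ~ has_rainbow_copy 2 c -> ramsey_prop 3 n r ->
  has_mono_copy n c.
Proof.
move=> rD cD NR Hr.
pose bad (W : BL N) := [&& W \subset D, c W != c set0 & c W != c D].
case: (pickP bad) => [W0 bW0|nobad].
  case: (arg_minnP (fun W : BL N => #|W|) bW0) => X.
  case/and3P => XD Xa Xb Xmin.
  have : X != set0 by apply: contraNneq Xa => ->.
  case/set0Pn => l lX.
  have lD : l \in D by apply: (subsetP XD).
  apply: (@mono_from_cube k N n r c (D :\ l) l (c set0) (c D) (c X)) => //.
    by move: rD; rewrite (cardsD1 l D) lD.
  move=> W WD.
  have WD' : W \subset D by apply: subset_trans WD (subsetDl _ _).
  apply/negPn/negP; rewrite !negb_or => /and3P [Wa Wb Wg].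
  have bW : bad W by rewrite /bad WD' Wa Wb.
  have := Xmin W bW => XW.
  case WX: (W \subset X).
    have : W == X by rewrite eqEcard WX XW.
    by move/eqP => E; rewrite E eqxx in Wg.
  case XW': (X \subset W).
    have : l \in D :\ l by apply: (subsetP WD); apply: (subsetP XW').
    by rewrite setD11.
  apply: NR; apply: (@rainbow_of k N c set0 W X D) => //; try exact: sub0set.
  all: try by rewrite ?WX ?XW'.
  all: try by rewrite eq_sym.
have : D != set0 by rewrite -card_gt0; apply: leq_ltn_trans rD.
case/set0Pn => l lD.
apply: (@mono_from_cube k N n r c (D :\ l) l (c set0) (c D) (c set0)) => //.
  by move: rD; rewrite (cardsD1 l D) lD.
move=> W WD.
have WD' : W \subset D by apply: subset_trans WD (subsetDl _ _).
have := nobad W; rewrite /bad WD' /= => /negbT.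
by rewrite negb_and !negbK => /orP [->|->]; rewrite ?orbT.
Qed.

Lemma case2 (k N n r : nat) (c : coloring k N) :
  r + n <= N -> (forall D : BL N, r < #|D| -> c D = c set0) -> has_mono_copy n c.
Proof.
move=> rnN Hc.
have nN : n <= N by apply: leq_trans rnN; apply: leq_addl.
pose E : 'I_n -> 'I_N := widen_ord nN.
have Ei : injective E by move=> i j /(congr1 val) => /= H; apply: val_inj.
pose Low : BL N := E @: [set: 'I_n].
pose P : BL N := ~: Low.
have cP : r <= #|P|.
  have := cardsC Low; rewrite card_imset // cardsT !card_ord => H.
  rewrite /P; lia.
have EL : forall x, E x \notin P by move=> x; rewrite /P inE negbK imset_f ?inE.
pose f (X : BL n) : BL N := if X == set0 then set0 else E @: X :|: P.
have fs : forall X Y, (f X \subset f Y) = (X \subset Y).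
  move=> X Y; rewrite /f; case: eqP => [->|/eqP X0]; first by rewrite !sub0set.
  case: eqP => [->|/eqP Y0].
    rewrite [X \subset _]subset0 (negbTE X0); apply/negP => S.
    case/set0Pn: X0 => x xX.
    have : E x \in (set0 : BL N) by apply: (subsetP S); rewrite inE imset_f.
    by rewrite inE.
  apply/idP/idP; last by move=> S; apply: setSU; apply: imsetS.
  move/subsetP => S; apply/subsetP => x xX.
  have : E x \in E @: Y :|: P by apply: S; rewrite inE imset_f.
  by rewrite inE (negbTE (EL x)) orbF (mem_imset _ _ Ei).
exists f; split; first by split => //; apply: sub_inj.
have fc : forall X, c (f X) = c set0.
  move=> X; rewrite /f; case: eqP => // /eqP X0; apply: Hc.
  case/set0Pn: X0 => x xX.
  apply: leq_trans (proper_card _); first exact: cP.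
  apply/properP; split; first exact: subsetUr.
  by exists (E x); rewrite ?inE ?imset_f ?EL.
by move=> X Y; rewrite !fc.
Qed.

Lemma core (k N n r : nat) (c : coloring k N) :
  r + n <= N -> ramsey_prop 3 n r -> has_rainbow_copy 2 c \/ has_mono_copy n c.
Proof.
move=> rnN Hr.
case: (classic (has_rainbow_copy 2 c)) => [|NR]; [by left | right].
case: (pickP (fun D : BL N => (r < #|D|) && (c D != c set0))) => [D /andP [rD cD]|H].
  exact: (case1 rD cD NR Hr).
apply: (case2 rnN) => D rD.
by have := H D; rewrite rD /= => /negbT; rewrite negbK => /eqP.
Qed.

Theorem theorem1p4 (k n r : nat) :
  4 <= k -> 1 <= n -> is_bool_ramsey 3 n r ->
  (k <= 2 ^ (r + n) -> GR_le k 2 n (r + n)) /\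
  (2 ^ (r + n) < k -> good k 2 n).
Proof.
move=> _ _ [Hr _]; split.
  by move=> _ N rnN c _; exact: core rnN Hr.
move=> Hk N _ c ex; apply: core => //.
have kN : k <= 2 ^ N.
  have -> : 2 ^ N = #|BL N| 
    by rewrite -cardsT -powersetT card_powerset cardsT card_ord.
  have <- : #|[set: 'I_k]| = k by rewrite cardsT card_ord.
  apply: (@leq_trans #|c @: [set: BL N]|);
    last by apply: leq_trans (leq_imset_card c [set: BL N]) _; rewrite cardsT.
  apply: subset_leq_card; apply/subsetP => i _.
  by have [X <-] := ex i; apply: imset_f; rewrite inE.
have : 2 ^ (r + n) < 2 ^ N by apply: leq_trans Hk kN.
by rewrite ltn_exp2l // => /ltnW.
Qed.
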